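(* Let $T\in\mathcal{BC}(X)$ and $s,p\in\rho_S(T)$ with $s\notin[p]$. Write $Q_s:=\mathcal Q_{c,s}(T)^{-1}$, $Q_p:=\mathcal Q_{c,p}(T)^{-1}$ and $s_0=\Re(s)$. Then $$sQ_sQ_pp-sQ_s\bar TQ_p-Q_s\bar TQ_pp+Q_s\bar T^2Q_p$$ $$=\big[(sQ_s-pQ_p)p-\bar s(sQ_s-pQ_p)\big](p^2-2s_0p+|s|^2)^{-1}+\big[(\bar TQ_p-Q_s\bar T)p-\bar s(\bar TQ_p-Q_s\bar T)\big](p^2-2s_0p+|s|^2)^{-1}.$$
   Context: $\mathbb H$ denotes the quaternions with units $e_1,e_2,e_3$; $\bar s$ is the conjugate of $s$; $[p]=\{\Re(p)+J|\underline p|:J\in\mathbb S\}$, $\mathbb S$ the unit purely imaginary quaternions. $X=X_{\mathbb R}\otimes\mathbb H$ is a two-sided quaternionic Banach module over a real Banach space $X_{\mathbb R}$; $\mathcal{BC}(X)$ is the set of $T=T_0+T_1e_1+T_2e_2+T_3e_3$ with $T_i\in\mathcal B(X_{\mathbb R})$ pairwise commuting; $\bar T=T_0-\sum_{i=1}^3T_ie_i$; $\mathcal Q_{c,s}(T)=s^2\mathcal I-s(T+\bar T)+T\bar T$; $\rho_S(T)$ is the set of $s\in\mathbb H$ for which $\mathcal Q_{c,s}(T)$ has a bounded inverse. *)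

(* Defs.v *)
From HB Require Import structures.
From mathcomp Require Import all_boot all_order all_algebra.
From mathcomp Require Import all_classical all_reals all_analysis.
Set Implicit Arguments. Unset Strict Implicit. Unset Printing Implicit Defensive.
Import Order.TTheory GRing.Theory Num.Theory.
Import numFieldNormedType.Exports.
Local Open Scope ring_scope.

Record quat (R : realType) := Quat { q0 : R; q1 : R; q2 : R; q3 : R }.
Arguments Quat {R}.

Section Quaternions.
Variable R : realType.
Implicit Types a b : quat R.

Definition qreal (r : R) : quat R := Quat r 0 0 0.
Definition qadd a b := Quat (q0 a + q0 b) (q1 a + q1 b) (q2 a + q2 b) (q3 a + q3 b).
Definition qopp a := Quat (- q0 a) (- q1 a) (- q2 a) (- q3 a).
Definition qsub a b := qadd a (qopp b).
Definition qmul a b := Quat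
  (q0 a * q0 b - q1 a * q1 b - q2 a * q2 b - q3 a * q3 b)
  (q0 a * q1 b + q1 a * q0 b + q2 a * q3 b - q3 a * q2 b)
  (q0 a * q2 b - q1 a * q3 b + q2 a * q0 b + q3 a * q1 b)
  (q0 a * q3 b + q1 a * q2 b - q2 a * q1 b + q3 a * q0 b).
Definition qconj a := Quat (q0 a) (- q1 a) (- q2 a) (- q3 a).
Definition qnorm2 a := q0 a ^+ 2 + q1 a ^+ 2 + q2 a ^+ 2 + q3 a ^+ 2.
Definition qRe a := q0 a.
Definition qImnorm a := Num.sqrt (q1 a ^+ 2 + q2 a ^+ 2 + q3 a ^+ 2).
(** multiplicative inverse (s^{-1} = \bar s / |s|^2; only used for s <> 0) *)
Definition qinv a := let n := qnorm2 a in
  Quat (q0 a / n) (- q1 a / n) (- q2 a / n) (- q3 a / n).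
Definition qS (J : quat R) := q0 J = 0 /\ qnorm2 J = 1.
Definition qsphere (p q : quat R) :=
  exists J, qS J /\ q = qadd (qreal (qRe p)) (qmul J (qreal (qImnorm p))).
End Quaternions.

(** ** The two-sided quaternionic module X = X_R (x) H,
    an element (x0,x1,x2,x3) standing for x0 + x1 e1 + x2 e2 + x3 e3 *)
Section Module.
Variables (R : realType) (V : completeNormedModType R).

Definition QX := (V * V * V * V)%type.
Definition mkX (x0 x1 x2 x3 : V) : QX := (x0, x1, x2, x3).
Definition X0 (x : QX) := x.1.1.1.
Definition X1 (x : QX) := x.1.1.2.
Definition X2 (x : QX) := x.1.2.
Definition X3 (x : QX) := x.2.

(** (sum_i f_i e_i) applied to (sum_j x_j e_j) = sum_{i,j} f_i(x_j) e_i e_j *)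
Definition qapply (f0 f1 f2 f3 : V -> V) (x : QX) : QX :=
  mkX (f0 (X0 x) - f1 (X1 x) - f2 (X2 x) - f3 (X3 x))
      (f0 (X1 x) + f1 (X0 x) + f2 (X3 x) - f3 (X2 x))
      (f0 (X2 x) - f1 (X3 x) + f2 (X0 x) + f3 (X1 x))
      (f0 (X3 x) + f1 (X2 x) - f2 (X1 x) + f3 (X0 x)).

(** left scalar multiplication a x, seen as the operator a I *)
Definition lmulX (a : quat R) : QX -> QX :=
  qapply (fun v => q0 a *: v) (fun v => q1 a *: v)
         (fun v => q2 a *: v) (fun v => q3 a *: v).

Definition opadd (A B : QX -> QX) : QX -> QX := fun x => A x + B x.
Definition opsub (A B : QX -> QX) : QX -> QX := fun x => A x - B x.

Definition bounded_op (f : V -> V) :=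
  continuous f /\ forall (a : R) (u v : V), f (a *: u + v) = a *: f u + f v.

Record BC := mkBC {
  T0 : V -> V; T1 : V -> V; T2 : V -> V; T3 : V -> V;
  T0_bd : bounded_op T0; T1_bd : bounded_op T1;
  T2_bd : bounded_op T2; T3_bd : bounded_op T3;
  comm01 : T0 \o T1 = T1 \o T0; comm02 : T0 \o T2 = T2 \o T0;
  comm03 : T0 \o T3 = T3 \o T0; comm12 : T1 \o T2 = T2 \o T1;
  comm13 : T1 \o T3 = T3 \o T1; comm23 : T2 \o T3 = T3 \o T2 }.

Definition BCop (T : BC) : QX -> QX := qapply (T0 T) (T1 T) (T2 T) (T3 T).
Definition BCconj (T : BC) : QX -> QX :=
  qapply (T0 T) (fun v => - T1 T v) (fun v => - T2 T v) (fun v => - T3 T v).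

Definition Qcs (T : BC) (s : quat R) : QX -> QX :=
  opadd (opsub (lmulX (qmul s s)) (lmulX s \o opadd (BCop T) (BCconj T)))
        (BCop T \o BCconj T).

Definition bounded_inverse (A B : QX -> QX) :=
  continuous B /\ (forall (a : R) (x y : QX), B (a *: x + y) = a *: B x + B y)
  /\ (forall x, A (B x) = x) /\ (forall x, B (A x) = x).

Definition rhoS (T : BC) (s : quat R) := exists B, bounded_inverse (Qcs T s) B.
End Module.

(* Main.v *)
Require Import Defs.
From HB Require Import structures.
From mathcomp Require Import all_boot all_order all_algebra.
From mathcomp Require Import all_classical all_reals all_analysis.
From mathcomp Require Import ring lra.
Import Order.TTheory GRing.Theory Num.Theory.
Import numFieldNormedType.Exports.
Local Open Scope ring_scope.
Set Implicit Arguments. Unset Strict Implicit. Unset Printing Implicit Defensive.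

Section SZE.
Variables (K : comPzRingType) (V : lmodType K).
Definition sze := (K * V)%type.
HB.instance Definition _ := GRing.Zmodule.on sze.
Definition sze_one : sze := (1, 0).
Definition sze_mul (x y : sze) : sze := (x.1 * y.1, x.1 *: y.2 + y.1 *: x.2).
Lemma sze_mulA : associative sze_mul.
Proof.
move=> [a u] [b v] [c w]; rewrite /sze_mul /=; congr pair; first by rewrite mulrA.
rewrite !scalerDr !scalerA [c * a]mulrC [c * b]mulrC [b * c]mulrC.
by rewrite addrA.
Qed.
Lemma sze_mulC : commutative sze_mul.
Proof. by move=> [a u] [b v]; rewrite /sze_mul /= mulrC addrC. Qed.
Lemma sze_mul1 : left_id sze_one sze_mul.
Proof. by move=> [a u]; rewrite /sze_mul /= mul1r scale1r scaler0 addr0. Qed.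
Lemma sze_mulDl : left_distributive sze_mul +%R.
Proof.
move=> [a u] [b v] [c w]; rewrite /sze_mul /=; congr pair; first by rewrite mulrDl.
by rewrite scalerDl scalerDr addrACA.
Qed.
HB.instance Definition _ := GRing.Zmodule_isComPzRing.Build sze sze_mulA sze_mulC sze_mul1 sze_mulDl.
Definition iota (v : V) : sze := (0, v).
Lemma iotaD u v : iota (u + v) = iota u + iota v.
Proof. by rewrite /iota; congr pair; rewrite addr0. Qed.
Lemma iotaN u : iota (- u) = - iota u.
Proof. by rewrite /iota; congr pair; rewrite oppr0. Qed.
Lemma iotaB u v : iota (u - v) = iota u - iota v.
Proof. by rewrite iotaD iotaN. Qed.
Lemma iota_inj u v : iota u = iota v -> u = v.
Proof. by case. Qed.
End SZE.

Ltac zmodr := apply: iota_inj; rewrite ?(iotaD, iotaB, iotaN); ring.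

Section Bic.
Variables (R : realType) (V : completeNormedModType R) (T : BC V).

Definition lin (f : V -> V) := forall (a : R) (u v : V), f (a *: u + v) = a *: f u + f v.
Definition commT (g : V -> V) :=
  [/\ g \o T0 T = T0 T \o g, g \o T1 T = T1 T \o g, g \o T2 T = T2 T \o g & g \o T3 T = T3 T \o g].

Lemma lin0 f : lin f -> f 0 = 0.
Proof.
move=> h; have e := h 1 0 0; rewrite !scale1r addr0 in e.
by apply: (addrI (f 0)); rewrite addr0 -e.
Qed.
Lemma linD f : lin f -> forall u v, f (u + v) = f u + f v.
Proof. by move=> h u v; have := h 1 u v; rewrite !scale1r. Qed.
Lemma linZ f : lin f -> forall a u, f (a *: u) = a *: f u.
Proof. by move=> h a u; rewrite -[a *: u]addr0 h lin0 // addr0. Qed.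
Lemma linN f : lin f -> forall u, f (- u) = - f u.
Proof. by move=> h u; rewrite -scaleN1r linZ // scaleN1r. Qed.
Lemma linB f : lin f -> forall u v, f (u - v) = f u - f v.
Proof. by move=> h u v; rewrite linD // linN. Qed.

Record bic := Bic { bf :> V -> V; bf_lin : lin bf;
  bf_comm : forall g, lin g -> commT g -> bf \o g = g \o bf }.

HB.instance Definition _ := gen_eqMixin bic.
HB.instance Definition _ := gen_choiceMixin bic.

Lemma bic_ext (f g : bic) : (forall v, f v = g v) -> f = g.
Proof.
case: f => f fl fc; case: g => g gl gc /= e.
have ? : f = g by apply: funext. subst g.
by rewrite (Prop_irrelevance fl gl) (Prop_irrelevance fc gc).
Qed.

Lemma bic_commv (f : bic) g : lin g -> commT g -> forall v, f (g v) = g (f v).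
Proof. by move=> l c v; have := bf_comm f l c => /(congr1 (fun h => h v)). Qed.

Lemma bzero_lin : lin (fun _ => 0).
Proof. by move=> a u v; rewrite scaler0 addr0. Qed.
Lemma bzero_comm g : lin g -> commT g -> (fun _ : V => 0) \o g = g \o (fun _ => 0).
Proof. by move=> l c; apply: funext => v /=; rewrite lin0. Qed.
Definition bzero : bic := Bic bzero_lin bzero_comm.

Lemma badd_lin (f g : bic) : lin (fun v => f v + g v).
Proof. by move=> a u v; rewrite (bf_lin f) (bf_lin g) scalerDr addrACA. Qed.
Lemma badd_comm (f g : bic) h : lin h -> commT h -> (fun v => f v + g v) \o h = h \o (fun v => f v + g v).
Proof. by move=> l c; apply: funext => v /=; rewrite linD // (bic_commv f l c) (bic_commv g l c). Qed.
Definition badd f g : bic := Bic (badd_lin f g) (badd_comm f g).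

Lemma bopp_lin (f : bic) : lin (fun v => - f v).
Proof. by move=> a u v; rewrite (bf_lin f) opprD scalerN. Qed.
Lemma bopp_comm (f : bic) h : lin h -> commT h -> (fun v => - f v) \o h = h \o (fun v => - f v).
Proof. by move=> l c; apply: funext => v /=; rewrite linN // (bic_commv f l c). Qed.
Definition bopp f : bic := Bic (bopp_lin f) (bopp_comm f).

Lemma bone_lin : lin (fun v => v). Proof. by []. Qed.
Lemma bone_comm h : lin h -> commT h -> (fun v : V => v) \o h = h \o (fun v => v).
Proof. by []. Qed.
Definition bone : bic := Bic bone_lin bone_comm.

Lemma bmul_lin (f g : bic) : lin (fun v => f (g v)).
Proof. by move=> a u v; rewrite (bf_lin g) (bf_lin f). Qed.
Lemma bmul_comm (f g : bic) h : lin h -> commT h -> (fun v => f (g v)) \o h = h \o (fun v => f (g v)).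
Proof. by move=> l c; apply: funext => v /=; rewrite (bic_commv g l c) (bic_commv f l c). Qed.
Definition bmul f g : bic := Bic (bmul_lin f g) (bmul_comm f g).

Lemma bemb_lin (r : R) : lin (fun v => r *: v).
Proof. by move=> a u v; rewrite scalerDr !scalerA mulrC. Qed.
Lemma bemb_comm (r : R) h : lin h -> commT h -> (fun v : V => r *: v) \o h = h \o (fun v => r *: v).
Proof. by move=> l c; apply: funext => v /=; rewrite linZ. Qed.
Definition bemb r : bic := Bic (bemb_lin r) (bemb_comm r).

Lemma lin_bd f : bounded_op f -> lin f.
Proof. by case. Qed.

Lemma commT_lin (f : bic) : commT f.
Proof.
have l0 := lin_bd (T0_bd T); have l1 := lin_bd (T1_bd T).
have l2 := lin_bd (T2_bd T); have l3 := lin_bd (T3_bd T).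
have c0 : commT (T0 T).
  by split=> //; [exact: comm01|exact: comm02|exact: comm03].
have c1 : commT (T1 T).
  by split=> //; [exact: esym (comm01 T)|exact: comm12|exact: comm13].
have c2 : commT (T2 T).
  by split=> //; [exact: esym (comm02 T)|exact: esym (comm12 T)|exact: comm23].
have c3 : commT (T3 T).
  by split=> //; [exact: esym (comm03 T)|exact: esym (comm13 T)|exact: esym (comm23 T)].
by split; apply: bf_comm.
Qed.

Definition bT0 : bic := @Bic (T0 T) (lin_bd (T0_bd T)) (fun g _ c => let: And4 e _ _ _ := c in esym e).
Definition bT1 : bic := @Bic (T1 T) (lin_bd (T1_bd T)) (fun g _ c => let: And4 _ e _ _ := c in esym e).
Definition bT2 : bic := @Bic (T2 T) (lin_bd (T2_bd T)) (fun g _ c => let: And4 _ _ e _ := c in esym e).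
Definition bT3 : bic := @Bic (T3 T) (lin_bd (T3_bd T)) (fun g _ c => let: And4 _ _ _ e := c in esym e).

Lemma baddA : associative badd.
Proof. by move=> f g h; apply: bic_ext => v /=; rewrite addrA. Qed.
Lemma baddC : commutative badd.
Proof. by move=> f g; apply: bic_ext => v /=; rewrite addrC. Qed.
Lemma badd0 : left_id bzero badd.
Proof. by move=> f; apply: bic_ext => v /=; rewrite add0r. Qed.
Lemma baddN : left_inverse bzero bopp badd.
Proof. by move=> f; apply: bic_ext => v /=; rewrite addNr. Qed.
HB.instance Definition _ := GRing.isZmodule.Build bic baddA baddC badd0 baddN.
Lemma bmulA : associative bmul.
Proof. by move=> f g h; apply: bic_ext. Qed.
Lemma bmulC : commutative bmul.
Proof. by move=> f g; apply: bic_ext => v /=; rewrite (bic_commv f (bf_lin g) (commT_lin g)). Qed.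
Lemma bmul1 : left_id bone bmul.
Proof. by move=> f; apply: bic_ext. Qed.
Lemma bmulDl : left_distributive bmul badd.
Proof. by move=> f g h; apply: bic_ext. Qed.
HB.instance Definition _ := GRing.Zmodule_isComPzRing.Build bic bmulA bmulC bmul1 bmulDl.

Lemma bfD (f g : bic) v : (f + g) v = f v + g v. Proof. by []. Qed.
Lemma bfN (f : bic) v : (- f) v = - f v. Proof. by []. Qed.
Lemma bfB (f g : bic) v : (f - g) v = f v - g v. Proof. by []. Qed.
Lemma bfM (f g : bic) v : (f * g) v = f (g v). Proof. by []. Qed.
Lemma bf0 v : (0 : bic) v = 0. Proof. by []. Qed.
Lemma bf1 v : (1 : bic) v = v. Proof. by []. Qed.
Lemma bfaD (f : bic) u v : f (u + v) = f u + f v. Proof. by have := @linD _ (bf_lin f); apply. Qed.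
Lemma bfaB (f : bic) u v : f (u - v) = f u - f v. Proof. by have := @linB _ (bf_lin f); apply. Qed.
Lemma bfaN (f : bic) u : f (- u) = - f u. Proof. by have := @linN _ (bf_lin f); apply. Qed.

Lemma bembB : {morph bemb : x y / x - y}.
Proof. by move=> x y; apply: bic_ext => v /=; rewrite scalerBl. Qed.
Lemma bemb1 : bemb 1 = 1.
Proof. by apply: bic_ext => v /=; rewrite scale1r. Qed.
Lemma bembM : {morph bemb : x y / x * y}.
Proof. by move=> x y; apply: bic_ext => v /=; rewrite scalerA. Qed.
HB.instance Definition _ := GRing.isZmodMorphism.Build R bic bemb bembB.
HB.instance Definition _ := GRing.isMonoidMorphism.Build R bic bemb (conj bemb1 bembM).
End Bic.

Goal forall (R : realType) (V : completeNormedModType R) (T : BC V) (x y : R) (f : bic T),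
  bemb T (x * (y + 2)) * f = f * bemb T y * bemb T x + (bemb T x) * f + f * bemb T x.
Proof. move=> *. ring. Qed.

Section Qc.
Variables (R : realType) (V : completeNormedModType R) (T : BC V).
Local Notation C := (bic T).

Record qc := QC { a0 : C; a1 : C; a2 : C; a3 : C }.
Definition qcmul x y := QC
  (a0 x * a0 y - a1 x * a1 y - a2 x * a2 y - a3 x * a3 y)
  (a0 x * a1 y + a1 x * a0 y + a2 x * a3 y - a3 x * a2 y)
  (a0 x * a2 y - a1 x * a3 y + a2 x * a0 y + a3 x * a1 y)
  (a0 x * a3 y + a1 x * a2 y - a2 x * a1 y + a3 x * a0 y).
Definition qcadd x y := QC (a0 x + a0 y) (a1 x + a1 y) (a2 x + a2 y) (a3 x + a3 y).
Definition qcsub x y := QC (a0 x - a0 y) (a1 x - a1 y) (a2 x - a2 y) (a3 x - a3 y).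
Definition embq (a : quat R) := QC (bemb T (q0 a)) (bemb T (q1 a)) (bemb T (q2 a)) (bemb T (q3 a)).
Definition xT := QC (bT0 T) (bT1 T) (bT2 T) (bT3 T).
Definition xb := QC (bT0 T) (- bT1 T) (- bT2 T) (- bT3 T).
Definition Phi (x : qc) : QX V -> QX V := qapply (a0 x) (a1 x) (a2 x) (a3 x).
Definition ms (a : quat R) :=
  qcadd (qcsub (embq (qmul a a)) (qcmul (embq a) (qcadd xT xb))) (qcmul xT xb).

Lemma QX_ext (y z : QX V) : X0 y = X0 z -> X1 y = X1 z -> X2 y = X2 z -> X3 y = X3 z -> y = z.
Proof. by case: y => [[[? ?] ?] ?]; case: z => [[[? ?] ?] ?]; rewrite /X0 /X1 /X2 /X3 /= => -> -> -> ->. Qed.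

Lemma qc_ext x y : a0 x = a0 y -> a1 x = a1 y -> a2 x = a2 y -> a3 x = a3 y -> x = y.
Proof. by case: x; case: y => /= ? ? ? ? ? ? ? ? -> -> -> ->. Qed.

Lemma Phi_mul x y z : Phi x (Phi y z) = Phi (qcmul x y) z.
Proof.
case: x => [x0 x1 x2 x3]; case: y => [y0 y1 y2 y3].
apply: QX_ext; rewrite /Phi /qapply /mkX /X0 /X1 /X2 /X3 /= ?(bfaD, bfaB, bfaN) ?(bfD, bfB, bfM, bfN); zmodr.
Qed.

Lemma Phi_add x y z : Phi x z + Phi y z = Phi (qcadd x y) z.
Proof.
case: x => [x0 x1 x2 x3]; case: y => [y0 y1 y2 y3].
apply: QX_ext; rewrite /Phi /qapply /mkX /X0 /X1 /X2 /X3 /= ?(bfD, bfB, bfM, bfN); zmodr.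
Qed.

Lemma Phi_sub x y z : Phi x z - Phi y z = Phi (qcsub x y) z.
Proof.
case: x => [x0 x1 x2 x3]; case: y => [y0 y1 y2 y3].
apply: QX_ext; rewrite /Phi /qapply /mkX /X0 /X1 /X2 /X3 /= ?(bfD, bfB, bfM, bfN); zmodr.
Qed.

Lemma Phi_argD x y z : Phi x (y + z) = Phi x y + Phi x z.
Proof.
case: x => [x0 x1 x2 x3].
apply: QX_ext; rewrite /Phi /qapply /mkX /X0 /X1 /X2 /X3 /= ?(bfaD, bfaB, bfaN); zmodr.
Qed.

Lemma Phi_argB x y z : Phi x (y - z) = Phi x y - Phi x z.
Proof.
case: x => [x0 x1 x2 x3].
apply: QX_ext; rewrite /Phi /qapply /mkX /X0 /X1 /X2 /X3 /= ?(bfaD, bfaB, bfaN); zmodr.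
Qed.

Lemma Phi_argN x y : Phi x (- y) = - Phi x y.
Proof.
case: x => [x0 x1 x2 x3].
apply: QX_ext; rewrite /Phi /qapply /mkX /X0 /X1 /X2 /X3 /= ?(bfaD, bfaB, bfaN); zmodr.
Qed.

Lemma Phi_one y : Phi (QC 1 0 0 0) y = y.
Proof.
apply: QX_ext; by rewrite /Phi /qapply /mkX /X0 /X1 /X2 /X3 /= ?subr0 ?addr0 ?add0r ?sub0r.
Qed.

Lemma Phi_embq a y : Phi (embq a) y = lmulX a y.
Proof. by []. Qed.
Lemma Phi_xT y : Phi xT y = BCop T y.
Proof. by []. Qed.
Lemma Phi_xb y : Phi xb y = BCconj T y.
Proof. by []. Qed.

Lemma Qcs_Phi a y : Qcs T a y = Phi (ms a) y.
Proof.
by rewrite /ms -Phi_add -Phi_sub -!Phi_mul -Phi_add.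
Qed.
End Qc.
Lemma dnz (R : realType) (s p : quat R) : ~ qsphere p s ->
  qnorm2 (qadd (qsub (qmul p p) (qmul (qreal (2 * qRe s)) p)) (qreal (qnorm2 s))) != 0.
Proof.
case: s => s0 s1 s2 s3; case: p => p0 p1 p2 p3 ns; apply/eqP => h0; apply: ns.
move: h0; rewrite /qnorm2 /qadd /qsub /qmul /qreal /qopp /qRe /= => h0.
set e0 := (X in X ^+ 2 + _ + _ + _ = 0) in h0.
set e1 := (X in _ + X ^+ 2 + _ + _ = 0) in h0.
set e2 := (X in _ + _ + X ^+ 2 + _ = 0) in h0.
set e3 := (X in _ + _ + _ + X ^+ 2 = 0) in h0.
have z0 : e0 = 0 by nra.
have z1 : e1 = 0 by nra.
have z2 : e2 = 0 by nra.
have z3 : e3 = 0 by nra.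
have f1 : p1 * (p0 - s0) = 0 by rewrite /e1 in z1; nra.
have f2 : p2 * (p0 - s0) = 0 by rewrite /e2 in z2; nra.
have f3 : p3 * (p0 - s0) = 0 by rewrite /e3 in z3; nra.
rewrite /e0 in z0.
have ps : p0 = s0.
  apply/eqP; rewrite -subr_eq0; apply/eqP.
  case: (eqVneq (p0 - s0) 0) => // hne; exfalso.
  have q1 : p1 = 0 by move/eqP: f1; rewrite mulf_eq0 (negbTE hne) orbF => /eqP.
  have q2 : p2 = 0 by move/eqP: f2; rewrite mulf_eq0 (negbTE hne) orbF => /eqP.
  have q3 : p3 = 0 by move/eqP: f3; rewrite mulf_eq0 (negbTE hne) orbF => /eqP.
  subst p1 p2 p3.
  have : (p0 - s0) ^+ 2 = 0 by nra.
  by move/eqP; rewrite sqrf_eq0 (negbTE hne).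
subst p0.
have SP : s1 ^+ 2 + s2 ^+ 2 + s3 ^+ 2 = p1 ^+ 2 + p2 ^+ 2 + p3 ^+ 2 by nra.
rewrite /qsphere /qImnorm /qRe /=.
case: (eqVneq (p1 ^+ 2 + p2 ^+ 2 + p3 ^+ 2) 0) => hP.
  have s1z : s1 = 0 by nra.
  have s2z : s2 = 0 by nra.
  have s3z : s3 = 0 by nra.
  subst s1 s2 s3; rewrite hP sqrtr0.
  exists (Quat 0 1 0 0); split.
    by rewrite /qS /qnorm2 /=; split=> //; ring.
  by rewrite /qadd /qmul /qreal /qRe /=; congr Quat; ring.
have Pge : 0 <= p1 ^+ 2 + p2 ^+ 2 + p3 ^+ 2 by nra.
have Ppos : 0 < p1 ^+ 2 + p2 ^+ 2 + p3 ^+ 2 by rewrite lt0r hP.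
set m := Num.sqrt _.
have mpos : 0 < m by rewrite sqrtr_gt0.
have m2 : m ^+ 2 = p1 ^+ 2 + p2 ^+ 2 + p3 ^+ 2 by rewrite sqr_sqrtr.
have mn0 : m != 0 by rewrite gt_eqF.
exists (Quat 0 (s1 / m) (s2 / m) (s3 / m)); split.
  rewrite /qS /qnorm2 /=; split=> //.
  rewrite expr0n /= add0r !expr_div_n -!mulrDl SP -m2 divff // expf_neq0 //.
by rewrite /qadd /qmul /qreal /qRe /=; congr Quat; field.
Qed.
Ltac qcring := apply: qc_ext; cbn [a0 a1 a2 a3 qcmul qcadd qcsub embq xb xT ms q0 q1 q2 q3 qmul qadd qsub qreal qconj qRe qnorm2 qopp]; unfold qRe, qnorm2; ring.

Section Main.
Variables (R : realType) (V : completeNormedModType R) (T : BC V).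

Lemma BK1 a B : bounded_inverse (Qcs T a) B -> forall y, Phi (ms T a) (B y) = y.
Proof. by case=> _ [_ [h _]] y; rewrite -Qcs_Phi h. Qed.
Lemma BK2 a B : bounded_inverse (Qcs T a) B -> forall y, B (Phi (ms T a) y) = y.
Proof. by case=> _ [_ [_ h]] y; rewrite -Qcs_Phi h. Qed.
Lemma BK3 a B : bounded_inverse (Qcs T a) B -> forall y, B (Qcs T a y) = y.
Proof. by case=> _ [_ [_ h]] y; rewrite h. Qed.
Lemma BD a B : bounded_inverse (Qcs T a) B -> forall y z, B (y + z) = B y + B z.
Proof. by case=> _ [h _] y z; have := h 1 y z; rewrite !scale1r. Qed.
Lemma BN a B : bounded_inverse (Qcs T a) B -> forall y, B (- y) = - B y.
Proof.
move=> hB y; have h0 : B 0 = 0.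
  apply: (addrI (B 0)); rewrite -(BD hB) addr0 addr0; reflexivity.
by case: hB => _ [h _]; have := h (-1) y 0; rewrite h0 !addr0 !scaleN1r.
Qed.
Lemma BB a B : bounded_inverse (Qcs T a) B -> forall y z, B (y - z) = B y - B z.
Proof. by move=> hB y z; rewrite (BD hB) (BN hB). Qed.
Lemma comm_B a B w : bounded_inverse (Qcs T a) B ->
  qcmul w (ms T a) = qcmul (ms T a) w -> forall y, Phi w (B y) = B (Phi w y).
Proof.
move=> hB hw y.
by rewrite -{1}(BK2 hB (Phi w (B y))) Phi_mul -hw -Phi_mul (BK1 hB).
Qed.
End Main.

Theorem theorem6p4 (R : realType) (V : completeNormedModType R) (T : BC V)
  (s p : quat R) (Qs Qp : QX V -> QX V) :
  rhoS T s -> rhoS T p -> ~ qsphere p s ->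
  bounded_inverse (Qcs T s) Qs -> bounded_inverse (Qcs T p) Qp ->
  let Tb := BCconj T in
  let c := qinv (qadd (qsub (qmul p p) (qmul (qreal (2 * qRe s)) p))
                      (qreal (qnorm2 s))) in
  let L := @lmulX R V in
  opadd (opsub (opsub (L s \o Qs \o Qp \o L p) (L s \o Qs \o Tb \o Qp))
               (Qs \o Tb \o Qp \o L p))
        (Qs \o Tb \o Tb \o Qp)
  = opadd
      ((opsub (opsub (L s \o Qs) (L p \o Qp) \o L p)
              (L (qconj s) \o opsub (L s \o Qs) (L p \o Qp))) \o L c)
      ((opsub (opsub (Tb \o Qp) (Qs \o Tb) \o L p)
              (L (qconj s) \o opsub (Tb \o Qp) (Qs \o Tb))) \o L c).
Proof.
move=> _ _ nsp hs hp Tb c L.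
apply: funext => y.
rewrite /opadd /opsub /c /L /Tb /=; clear c L Tb.
have dn := dnz nsp.
move: dn; set d := qadd _ _ => dn.
rewrite /qinv.
set k := (qnorm2 d)^-1.
have kn : k * qnorm2 d = 1 by rewrite /k mulVf.
clearbody k.
have DC : qcmul (embq T d) (embq T (Quat (q0 d * k) (- q1 d * k) (- q2 d * k) (- q3 d * k)))
    = QC 1 0 0 0.
  clearbody d.
  rewrite (_ : QC 1 0 0 0 = embq T (Quat 1 0 0 0)); last by rewrite /embq /= rmorph1 raddf0.
  rewrite (_ : qcmul _ _ = embq T (qmul d (Quat (q0 d * k) (- q1 d * k) (- q2 d * k) (- q3 d * k)))); last by qcring.
  congr (embq T _); rewrite /qmul /=; rewrite /qnorm2 in kn; congr Quat; rewrite -?kn; ring.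
rewrite -!(Phi_embq T) -!Phi_xb.
have Ey : y = Phi (embq T d) (Phi (embq T (Quat (q0 d * k) (- q1 d * k) (- q2 d * k) (- q3 d * k))) y).
  by rewrite Phi_mul DC Phi_one.
rewrite {1 2 3 4}Ey.
move: (Phi (embq T (Quat (q0 d * k) (- q1 d * k) (- q2 d * k) (- q3 d * k))) y) => w.
rewrite /d.
have [v ->] : exists v, w = Qcs T p v.
  by exists (Qp w); case: hp => _ [_ [h _]]; rewrite h.
rewrite !Phi_argB.
rewrite -!(comm_B hp); try by qcring.
rewrite (BK3 hp) !Qcs_Phi.
rewrite !(comm_B hs); try by qcring.
apply: (can_inj (BK2 hs)).
rewrite !(Phi_argB, Phi_argD, Phi_argN) !(BK1 hs) !Phi_mul.
rewrite !(Phi_sub, Phi_add).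
congr (Phi _ v).
qcring.
Qed.
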